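(* There is no non-trivial subfunctor $F$ of the identity functor on the category of groups such that $F(G)$ is uniquely divisible for every group $G$.
   Context: A group $G$ is uniquely divisible if for every $g\in G$ and every nonzero integer $n$ there is a unique $h\in G$ with $h^n=g$. A subfunctor $F$ of the identity functor assigns to each group $G$ a subgroup $F(G)\subseteq G$ with $f(F(G))\subseteq F(G')$ for every homomorphism $f:G\to G'$; it is non-trivial if $F(G)\neq 1$ for some $G$. *)

(* Defs.v *)
From Stdlib Require Import ZArith.

Record Group := {
  carrier :> Type;
  gop : carrier -> carrier -> carrier;
  gone : carrier;
  ginv : carrier -> carrier;
  gop_assoc : forall x y z, gop x (gop y z) = gop (gop x y) z;
  gop_1l : forall x, gop gone x = x;
  gop_1r : forall x, gop x gone = x;
  gop_Vl : forall x, gop (ginv x) x = gone;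
  gop_Vr : forall x, gop x (ginv x) = gone
}.

Arguments gop {g} _ _.
Arguments gone {g}.
Arguments ginv {g} _.

Definition is_hom {G H : Group} (f : G -> H) : Prop :=
  forall x y : G, f (gop x y) = gop (f x) (f y).

Fixpoint npow {G : Group} (x : G) (n : nat) : G :=
  match n with
  | O => gone
  | S m => gop x (npow x m)
  end.

Definition zpow {G : Group} (x : G) (n : Z) : G :=
  match n with
  | Z0 => gone
  | Zpos p => npow x (Pos.to_nat p)
  | Zneg p => ginv (npow x (Pos.to_nat p))
  end.

Record subfunctor := {
  sf : forall G : Group, G -> Prop;
  sf_one : forall G : Group, sf G gone;
  sf_op : forall (G : Group) (x y : G), sf G x -> sf G y -> sf G (gop x y);
  sf_inv : forall (G : Group) (x : G), sf G x -> sf G (ginv x);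
  sf_nat : forall (G H : Group) (f : G -> H), is_hom f ->
             forall x : G, sf G x -> sf H (f x)
}.

Definition nontrivial (F : subfunctor) : Prop :=
  exists (G : Group) (x : G), sf F G x /\ x <> gone.

(* The subgroup S (given as a predicate, assumed to be a subgroup) is
   uniquely divisible: every g in S has a unique n-th root in S, n <> 0. *)
Definition uniquely_divisible_sub (G : Group) (S : G -> Prop) : Prop :=
  forall g : G, S g -> forall n : Z, n <> 0%Z ->
    exists h : G, S h /\ zpow h n = g /\
      forall h' : G, S h' -> zpow h' n = g -> h' = h.

(* Main.v *)
Require Import Defs.
From Stdlib Require Import ZArith.
From Stdlib Require Import ClassicalEpsilon FunctionalExtensionality ProofIrrelevance.

Record Perm (X : Type) := mkPerm {
  pf : X -> X; pg : X -> X;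
  pfg : forall z, pf (pg z) = z; pgf : forall z, pg (pf z) = z }.
Arguments pf {X} _ _.
Arguments pg {X} _ _.
Arguments pfg {X} _ _.
Arguments pgf {X} _ _.

Lemma perm_ext (X : Type) (p q : Perm X) :
  (forall z, pf p z = pf q z) -> p = q.
Proof.
  destruct p as [f1 g1 fg1 gf1], q as [f2 g2 fg2 gf2]; simpl; intro H.
  assert (f1 = f2) by (apply functional_extensionality; exact H). subst f2.
  assert (g1 = g2).
  { apply functional_extensionality; intro z.
    rewrite <- (fg2 z) at 1. apply gf1. }
  subst g2. f_equal; apply proof_irrelevance.
Qed.

Definition pcomp {X} (p q : Perm X) : Perm X.
Proof.
  refine (mkPerm X (fun z => pf p (pf q z)) (fun z => pg q (pg p z)) _ _).
  - intro z. rewrite pfg. apply pfg.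
  - intro z. rewrite pgf. apply pgf.
Defined.

Definition pid X : Perm X := mkPerm X (fun z => z) (fun z => z) (fun z => eq_refl) (fun z => eq_refl).
Definition pinv {X} (p : Perm X) : Perm X := mkPerm X (pg p) (pf p) (pgf p) (pfg p).

Definition SymG (X : Type) : Group.
Proof.
  refine (Build_Group (Perm X) pcomp (pid X) pinv _ _ _ _ _);
  intros; apply perm_ext; intros; simpl; try reflexivity.
  - apply pgf.
  - apply pfg.
Defined.

Section G.
Variable G : Group.

Lemma mul_cancel_l (a b c : G) : gop a b = gop a c -> b = c.
Proof.
  intro H. rewrite <- (gop_1l G b), <- (gop_1l G c), <- (gop_Vl G a),
    <- !gop_assoc, H. reflexivity.
Qed.

Lemma inv_mul (a z : G) : gop (ginv a) (gop a z) = z.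
Proof. rewrite gop_assoc, gop_Vl, gop_1l. reflexivity. Qed.
Lemma mul_inv (a z : G) : gop a (gop (ginv a) z) = z.
Proof. rewrite gop_assoc, gop_Vr, gop_1l. reflexivity. Qed.

Lemma npow_one n : npow (gone : G) n = gone.
Proof. induction n; simpl; [reflexivity| rewrite IHn; apply gop_1l]. Qed.

Lemma zpow_one k : zpow (gone : G) k = gone.
Proof.
  destruct k; simpl; rewrite ?npow_one; try reflexivity.
  rewrite <- (gop_1l G (ginv gone)). apply gop_Vr.
Qed.

Definition conj (a z : G) := gop a (gop z (ginv a)).
Lemma conj_hom (a : G) : is_hom (conj a).
Proof.
  intros x y. unfold conj.
  rewrite !gop_assoc. f_equal. rewrite <- !gop_assoc. f_equal. f_equal.
  rewrite inv_mul. reflexivity.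
Qed.
End G.

Definition Lperm {G : Group} (a : G) : Perm G.
Proof.
  refine (mkPerm G (gop a) (gop (ginv a)) _ _).
  - apply mul_inv.
  - apply inv_mul.
Defined.

Lemma Lhom (G : Group) : is_hom (G := G) (H := SymG G) Lperm.
Proof. intros x y. apply perm_ext. intro z. simpl. symmetry. apply gop_assoc. Qed.

Definition eqd {T : Type} (a b : T) : {a = b} + {a <> b} := excluded_middle_informative (a = b).

Definition tfun {G : Group} (x : G) (z : G) : G :=
  if eqd z gone then x else if eqd z x then gone else z.

Lemma tfun_inv {G : Group} (x : G) (hx : x <> gone) z : tfun x (tfun x z) = z.
Proof.
  unfold tfun.
  destruct (eqd z gone) as [e|n].
  - destruct (eqd x gone); [contradiction|]. destruct (eqd x x); [subst; reflexivity|congruence].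
  - destruct (eqd z x) as [e|n'].
    + destruct (eqd gone gone); [subst; reflexivity|congruence].
    + destruct (eqd z gone); [contradiction|]. destruct (eqd z x); [contradiction|reflexivity].
Qed.

Definition tau {G : Group} (x : G) (hx : x <> gone) : Perm G :=
  mkPerm G (tfun x) (tfun x) (tfun_inv x hx) (tfun_inv x hx).

Theorem corollary3p12 :
  ~ exists F : subfunctor,
      nontrivial F /\ forall G : Group, uniquely_divisible_sub G (sf F G).
Proof.
  intros [F [[G0 [x [Fx hx]]] UD]].
  assert (LA : forall (H : Group) (y : H) k, sf F H y -> zpow y k = gone -> k <> 0%Z -> y = gone).
  { intros H y k Fy Ey Hk.
    destruct (UD H gone (sf_one F H) k Hk) as [h [_ [_ U]]].
    rewrite (U y Fy Ey). symmetry. apply U; [apply sf_one| apply zpow_one]. }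
  assert (hxx : gop x x <> gone).
  { intro E. apply hx. apply (LA G0 x 2%Z Fx); [|discriminate].
    simpl. rewrite gop_1r. exact E. }
  assert (hxxx : gop x x <> x).
  { intro E. apply hx. apply (mul_cancel_l G0 x). rewrite gop_1r. exact E. }
  assert (hi1 : ginv x <> gone).
  { intro E. apply hx. rewrite <- (gop_Vl G0 x), E, gop_1l. reflexivity. }
  assert (hix : ginv x <> x).
  { intro E. apply hxx. rewrite <- E at 1. apply gop_Vl. }
  set (H := SymG G0).
  set (t := tau x hx : H).
  set (c := gop (Lperm x : H) (conj H t (ginv (Lperm x : H)))).
  assert (Fc : sf F H c).
  { apply sf_op.
    - apply (sf_nat F G0 H Lperm (Lhom G0)); exact Fx.
    - apply (sf_nat F H H (conj H t) (conj_hom H t)). apply sf_inv.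
      apply (sf_nat F G0 H Lperm (Lhom G0)); exact Fx. }
  assert (cf : forall z, pf c z = gop x (tfun x (gop (ginv x) (tfun x z)))).
  { intro z. reflexivity. }
  assert (c1 : pf c gone = gop x x).
  { rewrite cf. unfold tfun at 2. destruct (eqd gone gone); [|congruence].
    rewrite gop_Vl. unfold tfun. destruct (eqd gone gone); [reflexivity|congruence]. }
  assert (cx : pf c x = gone).
  { rewrite cf. unfold tfun at 2. destruct (eqd x gone); [contradiction|].
    destruct (eqd x x); [|congruence]. rewrite gop_1r.
    unfold tfun. destruct (eqd (ginv x) gone); [contradiction|].
    destruct (eqd (ginv x) x); [contradiction|]. apply gop_Vr. }
  assert (cxx : pf c (gop x x) = x).
  { rewrite cf. unfold tfun at 2. destruct (eqd (gop x x) gone); [contradiction|].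
    destruct (eqd (gop x x) x); [contradiction|]. rewrite inv_mul.
    unfold tfun. destruct (eqd x gone); [contradiction|].
    destruct (eqd x x); [|congruence]. apply gop_1r. }
  assert (cz : forall z, z <> gone -> z <> x -> z <> gop x x -> pf c z = z).
  { intros z h1 h2 h3. rewrite cf. unfold tfun at 2.
    destruct (eqd z gone); [contradiction|]. destruct (eqd z x); [contradiction|].
    unfold tfun. destruct (eqd (gop (ginv x) z) gone) as [e|_].
    { exfalso. apply h2. rewrite <- (mul_inv G0 x z), e. apply gop_1r. }
    destruct (eqd (gop (ginv x) z) x) as [e|_].
    { exfalso. apply h3. rewrite <- (mul_inv G0 x z), e. reflexivity. }
    apply mul_inv. }
  assert (c3 : zpow c 3 = gone).
  { apply perm_ext. intro z. change (pf c (pf c (pf c z)) = z).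
    destruct (eqd z gone) as [e|n1]; [subst; rewrite c1, cxx, cx; reflexivity|].
    destruct (eqd z x) as [e|n2]; [subst; rewrite cx, c1, cxx; reflexivity|].
    destruct (eqd z (gop x x)) as [e|n3]; [subst; rewrite cxx, cx, c1; reflexivity|].
    rewrite !(cz z n1 n2 n3). reflexivity. }
  pose proof (LA H c 3%Z Fc c3 ltac:(discriminate)) as E.
  apply hxx. rewrite <- c1, E. reflexivity.
Qed.
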